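(* Let $T$ be an interface element, $\mathbf u\in\mathbf{PC}^2_{int}(T)$, $s\in\{+,-\}$ and $s'$ the opposite sign. For every $i\in\mathcal I^{s'}$ and every $X\in T^s_\ast$, $$\mathbf u^{s'}(A_i)=\mathbf u^s(X)+\big((A_i-X)^T\otimes I_2\big)\mathrm{Vec}(\nabla\mathbf u^s(X))+\big((A_i-\widetilde Y_i)^T\otimes I_2\big)\big(M^s(\widetilde Y_i)-I_4\big)\mathrm{Vec}(\nabla\mathbf u^s(X))+\mathbf R^s_i(X),$$ where $\mathbf R^s_i=\mathbf R^s_{i1}+\mathbf R^s_{i2}+\mathbf R^s_{i3}$ with $$\mathbf R^s_{i1}(X)=\int_0^{\tilde t_i}(1-t)\tfrac{d^2}{dt^2}\mathbf u^s(Y_i(t,X))\,dt,\quad \mathbf R^s_{i2}(X)=\int_{\tilde t_i}^1(1-t)\tfrac{d^2}{dt^2}\mathbf u^{s'}(Y_i(t,X))\,dt,$$ $$\mathbf R^s_{i3}(X)=(1-\tilde t_i)\big((A_i-X)^T\otimes I_2\big)\big(M^s(\widetilde Y_i)-I_4\big)\int_0^{\tilde t_i}\tfrac{d}{dt}\mathrm{Vec}(\nabla\mathbf u^s(Y_i(t,X)))\,dt.$$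
   Context: Lamé parameters $\lambda^s,\mu^s>0$ on $\Omega^s$, $s=\pm$; stress $\sigma^s_{ij}(\mathbf u)=\lambda^s(\nabla\cdot\mathbf u)\delta_{ij}+2\mu^s\epsilon_{ij}(\mathbf u)$, $\epsilon_{ij}(\mathbf u)=\frac12(\partial_{x_j}u_i+\partial_{x_i}u_j)$. $\nabla\mathbf u$ is the Jacobian with $i$-th row $\nabla u_i$; $\mathrm{Vec}$ stacks the columns of a matrix into a vector; $\otimes$ is the Kronecker product; $I_n$ the identity. $T$ is a mesh element (triangle or rectangle) whose interior meets the interface $\Gamma$, which meets $\partial T$ at two points $D,E$ on different edges and is $C^2$ in $T$; $T^s=T\cap\Omega^s$. $\mathbf{PC}^2_{int}(T)$: $\mathbf u$ with $\mathbf u^s=\mathbf u|_{T^s}\in[C^2(\overline{T^s})]^2$, $\mathbf u^+=\mathbf u^-$ and $\sigma^+(\mathbf u^+)\mathbf n=\sigma^-(\mathbf u^-)\mathbf n$ on $\Gamma\cap T$. For $\widetilde X\in\Gamma\cap T$ with unit normal $(\tilde n_1,\tilde n_2)$, $N^s(\widetilde X)$ is the $4\times4$ matrix with rows $((\lambda^s+2\mu^s)\tilde n_1,\mu^s\tilde n_2,\mu^s\tilde n_2,\lambda^s\tilde n_1)$, $(\lambda^s\tilde n_2,\mu^s\tilde n_1,\mu^s\tilde n_1,(\lambda^s+2\mu^s)\tilde n_2)$, $(-\tilde n_2,0,\tilde n_1,0)$, $(0,-\tilde n_2,0,\tilde n_1)$, and $M^-=(N^+)^{-1}N^-$, $M^+=(N^-)^{-1}N^+$.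 Nodes $A_i$, $i\in\mathcal I$, are the vertices of $T$ (linear/bilinear case) or the edge midpoints (rotated $Q_1$ case); $\mathcal I^s=\{i:A_i\in T^s\}$. The segment $l=\overline{DE}$ splits $T$ into $\overline T^+,\overline T^-$ (labelled so that $\overline T^s$ is the part approximating $T^s$). $T_{int}$ is the union of $l_t\cap T$ over all tangent lines $l_t$ to $\Gamma\cap T$, and $T^s_\ast=\overline T^s\cap(T^s\setminus T_{int})$. $Y_i(t,X)=tA_i+(1-t)X$. For $X\in T^s_\ast$ and $i\in\mathcal I^{s'}$ the segment from $X$ to $A_i$ meets $\Gamma\cap T$ at exactly one point $\widetilde Y_i=Y_i(\tilde t_i,X)$, $\tilde t_i\in[0,1]$. *)

(* Defs.v *)
From Stdlib Require Import Reals List ClassicalEpsilon.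
Open Scope R_scope.

Definition R2 := (R * R)%type.
Definition padd (p q : R2) : R2 := (fst p + fst q, snd p + snd q).
Definition psub (p q : R2) : R2 := (fst p - fst q, snd p - snd q).
Definition pscal (r : R) (p : R2) : R2 := (r * fst p, r * snd p).
Definition coord (p : R2) (j : nat) : R :=
  match j with O => fst p | _ => snd p end.
Definition dist2 (p q : R2) : R :=
  sqrt ((fst p - fst q) ^ 2 + (snd p - snd q) ^ 2).
Definition shift (p : R2) (j : nat) (h : R) : R2 :=
  match j with O => (fst p + h, snd p) | _ => (fst p, snd p + h) end.

Inductive sgn := Plus | Minus.
Definition opp (s : sgn) : sgn := match s with Plus => Minus | Minus => Plus end.

(** * Derivatives and integrals of real functions (classical choice of the
    value; they coincide with the usual ones whenever these exist). *)
Definition Dt (f : R -> R) (t : R) : R :=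
  epsilon (inhabits 0) (fun l => derivable_pt_lim f t l).
Definition Rint (f : R -> R) (a b : R) : R :=
  epsilon (inhabits 0)
    (fun l => exists pr : Riemann_integrable f a b, RiemannInt pr = l).

Definition partial (f : R2 -> R) (j : nat) (p : R2) : R :=
  Dt (fun h => f (shift p j h)) 0.
Definition cont_at (g : R2 -> R) (p : R2) : Prop :=
  forall eps, 0 < eps -> exists delta, 0 < delta /\
    forall q, dist2 q p < delta -> Rabs (g q - g p) < eps.
Definition open_set (U : R2 -> Prop) : Prop :=
  forall p, U p -> exists r, 0 < r /\ forall q, dist2 q p < r -> U q.
Definition closure (S : R2 -> Prop) (p : R2) : Prop :=
  forall r, 0 < r -> exists q, S q /\ dist2 q p < r.
Definition C1_on (U : R2 -> Prop) (f : R2 -> R) : Prop :=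
  (forall p, U p -> cont_at f p) /\
  forall j, (j < 2)%nat -> forall p, U p ->
    (exists l, derivable_pt_lim (fun h => f (shift p j h)) 0 l) /\
    cont_at (partial f j) p.
Definition C2_on (U : R2 -> Prop) (f : R2 -> R) : Prop :=
  C1_on U f /\ forall j, (j < 2)%nat -> C1_on U (partial f j).

(** * Matrices (entries indexed from 0) *)
Definition Mx := nat -> nat -> R.
Fixpoint sumR (n : nat) (f : nat -> R) : R :=
  match n with O => 0 | S m => sumR m f + f m end.
Definition mmul (n : nat) (A B : Mx) : Mx :=
  fun i j => sumR n (fun k => A i k * B k j).
Definition idm : Mx := fun i j => if Nat.eqb i j then 1 else 0.
Definition madd (A B : Mx) : Mx := fun i j => A i j + B i j.
Definition msub (A B : Mx) : Mx := fun i j => A i j - B i j.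
Definition mscal (r : R) (A : Mx) : Mx := fun i j => r * A i j.
Definition mx_eq (m n : nat) (A B : Mx) : Prop :=
  forall i j, (i < m)%nat -> (j < n)%nat -> A i j = B i j.
Definition minv (n : nat) (A : Mx) : Mx :=
  epsilon (inhabits (fun _ _ => 0))
    (fun B => mx_eq n n (mmul n B A) idm /\ mx_eq n n (mmul n A B) idm).
(** Kronecker product A (x) B, where B has size p x q *)
Definition kron (p q : nat) (A B : Mx) : Mx :=
  fun i j => A (i / p)%nat (j / q)%nat * B (i mod p)%nat (j mod q)%nat.
(** Vec: stacks the columns of a matrix with m rows *)
Definition vecm (m : nat) (A : Mx) : Mx :=
  fun k _ => A (k mod m)%nat (k / m)%nat.
(** row vector p^T (1 x 2) of a point *)
Definition rowp (p : R2) : Mx := fun _ j => coord p j.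

(** * Vector fields u = (u_0, u_1) : R2 -> R^2 *)
Definition ucol (u : nat -> R2 -> R) (p : R2) : Mx := fun i _ => u i p.
(** Jacobian: i-th row is grad u_i *)
Definition grad (u : nat -> R2 -> R) (p : R2) : Mx :=
  fun i j => partial (u i) j p.
Definition VecGrad (u : nat -> R2 -> R) (p : R2) : Mx := vecm 2 (grad u p).
Definition kdelta (i j : nat) : R := if Nat.eqb i j then 1 else 0.
Definition stress (lam mu : R) (u : nat -> R2 -> R) (p : R2) : Mx :=
  fun i j => lam * (partial (u 0%nat) 0 p + partial (u 1%nat) 1 p) * kdelta i j
             + 2 * mu * ((partial (u i) j p + partial (u j) i p) / 2).

(** * The interface curve Gamma ∩ T, parametrised by gam on [0,1] *)
Definition gdot (gam : R -> R2) (tau : R) : R2 :=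
  (Dt (fun t => fst (gam t)) tau, Dt (fun t => snd (gam t)) tau).
Definition C2_real (c : R -> R) : Prop :=
  exists a b, a < 0 /\ 1 < b /\ forall tau, a < tau < b ->
    (exists l, derivable_pt_lim c tau l) /\
    (exists l, derivable_pt_lim (Dt c) tau l) /\
    continuity_pt (Dt (Dt c)) tau.
Definition unormal (gam : R -> R2) (P : R2) : R2 :=
  let tau := epsilon (inhabits 0) (fun tau => 0 <= tau <= 1 /\ gam tau = P) in
  let v := gdot gam tau in
  let nv := sqrt (fst v ^ 2 + snd v ^ 2) in
  (snd v / nv, - fst v / nv).

Definition Nmat (lam mu : R) (n : R2) : Mx :=
  let n1 := fst n in let n2 := snd n in
  fun i j =>
    match i, j with
    | 0, 0 => (lam + 2 * mu) * n1 | 0, 1 => mu * n2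
    | 0, 2 => mu * n2 | 0, 3 => lam * n1
    | 1, 0 => lam * n2 | 1, 1 => mu * n1
    | 1, 2 => mu * n1 | 1, 3 => (lam + 2 * mu) * n2
    | 2, 0 => - n2 | 2, 2 => n1
    | 3, 1 => - n2 | 3, 3 => n1
    | _, _ => 0
    end.
Definition Mmat (lam mu : sgn -> R) (s : sgn) (n : R2) : Mx :=
  mmul 4 (minv 4 (Nmat (lam (opp s)) (mu (opp s)) n)) (Nmat (lam s) (mu s) n).

Inductive elem := Tri (a b c : R2) | Rect (x0 x1 y0 y1 : R).
Inductive fespace := LinearFE | BilinearFE | RotQ1FE.
Definition cross (u v : R2) : R := fst u * snd v - snd u * fst v.
Definition valid_elem (e : elem) : Prop :=
  match e with
  | Tri a b c => cross (psub b a) (psub c a) <> 0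
  | Rect x0 x1 y0 y1 => x0 < x1 /\ y0 < y1
  end.
Definition inT (e : elem) (P : R2) : Prop :=
  match e with
  | Tri a b c => exists l1 l2 l3, 0 <= l1 /\ 0 <= l2 /\ 0 <= l3 /\
      l1 + l2 + l3 = 1 /\
      P = padd (pscal l1 a) (padd (pscal l2 b) (pscal l3 c))
  | Rect x0 x1 y0 y1 => x0 <= fst P <= x1 /\ y0 <= snd P <= y1
  end.
Definition interior (S : R2 -> Prop) (P : R2) : Prop :=
  exists r, 0 < r /\ forall q, dist2 q P < r -> S q.
Definition vertices (e : elem) : list R2 :=
  match e with
  | Tri a b c => a :: b :: c :: nil
  | Rect x0 x1 y0 y1 => (x0, y0) :: (x1, y0) :: (x1, y1) :: (x0, y1) :: nil
  end.
Definition edges (e : elem) : list (R2 * R2) :=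
  match e with
  | Tri a b c => (a, b) :: (b, c) :: (c, a) :: nil
  | Rect x0 x1 y0 y1 =>
      ((x0, y0), (x1, y0)) :: ((x1, y0), (x1, y1)) ::
      ((x1, y1), (x0, y1)) :: ((x0, y1), (x0, y0)) :: nil
  end.
Definition onseg (P : R2) (ed : R2 * R2) : Prop :=
  exists t, 0 <= t <= 1 /\ P = padd (fst ed) (pscal t (psub (snd ed) (fst ed))).
Definition midpoint (ed : R2 * R2) : R2 := pscal (1/2) (padd (fst ed) (snd ed)).
Definition nodes (f : fespace) (e : elem) : list R2 :=
  match f, e with
  | LinearFE, Tri _ _ _ => vertices e
  | BilinearFE, Rect _ _ _ _ => vertices e
  | RotQ1FE, Rect _ _ _ _ => map midpoint (edges e)
  | _, _ => nil
  end.

Definition Tsub (e : elem) (Om : sgn -> R2 -> Prop) (s : sgn) (P : R2) : Prop :=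
  inT e P /\ Om s P.

Definition Tint (e : elem) (gam : R -> R2) (P : R2) : Prop :=
  inT e P /\ exists tau r, 0 <= tau <= 1 /\
    P = padd (gam tau) (pscal r (gdot gam tau)).

Definition side (D E P : R2) : R := cross (psub E D) (psub P D).
Definition Tbar (e : elem) (D E : R2) (sg : R) (P : R2) : Prop :=
  inT e P /\ 0 <= sg * side D E P.

Definition Tstar (e : elem) (Om : sgn -> R2 -> Prop) (gam : R -> R2)
    (D E : R2) (sg : R) (s : sgn) (X : R2) : Prop :=
  Tbar e D E sg X /\ Tsub e Om s X /\ ~ Tint e gam X.

Definition Yseg (A X : R2) (t : R) : R2 := padd (pscal t A) (pscal (1 - t) X).

Definition interface_element (e : elem) (Om : sgn -> R2 -> Prop)
    (Gam : R2 -> Prop) (gam : R -> R2) (D E : R2) : Prop :=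
  valid_elem e /\
  open_set (Om Plus) /\ open_set (Om Minus) /\
  (forall P, ~ (Om Plus P /\ Om Minus P)) /\
  (forall s P, Gam P -> ~ Om s P) /\
  (forall P, inT e P -> Om Plus P \/ Om Minus P \/ Gam P) /\
  (forall P, (Gam P /\ inT e P) <-> exists tau, 0 <= tau <= 1 /\ gam tau = P) /\
  (exists tau, 0 <= tau <= 1 /\ interior (inT e) (gam tau)) /\
  gam 0 = D /\ gam 1 = E /\
  (exists k1 k2, k1 <> k2 /\ (k1 < length (edges e))%nat /\
     (k2 < length (edges e))%nat /\
     onseg D (nth k1 (edges e) (D, D)) /\ onseg E (nth k2 (edges e) (E, E))) /\
  C2_real (fun t => fst (gam t)) /\ C2_real (fun t => snd (gam t)) /\
  (forall tau, 0 <= tau <= 1 -> gdot gam tau <> (0, 0)) /\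
  (forall t1 t2, 0 <= t1 <= 1 -> 0 <= t2 <= 1 -> gam t1 = gam t2 -> t1 = t2).

(** Labelling: Tbar^s (sign sg of the side of line DE) is the part of T
    approximating T^s: vertices of T in T^s lie on its side, those in T^{s'}
    on the other side. *)
Definition labelling (e : elem) (Om : sgn -> R2 -> Prop) (D E : R2)
    (s : sgn) (sg : R) : Prop :=
  (sg = 1 \/ sg = -1) /\
  (forall v, In v (vertices e) -> Om s v -> 0 <= sg * side D E v) /\
  (forall v, In v (vertices e) -> Om (opp s) v -> sg * side D E v <= 0).

(** PC^2_int(T): u s k is the k-th component of u^s, C^2 up to the closure
    of T^s (i.e. C^2 on an open neighbourhood of closure(T^s)), with
    continuity and traction continuity across Gamma ∩ T. *)
Definition PC2_int (e : elem) (Om : sgn -> R2 -> Prop) (Gam : R2 -> Prop)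
    (gam : R -> R2) (lam mu : sgn -> R) (u : sgn -> nat -> R2 -> R) : Prop :=
  (forall s, exists U, open_set U /\
     (forall p, closure (Tsub e Om s) p -> U p) /\
     forall k, (k < 2)%nat -> C2_on U (u s k)) /\
  (forall P, Gam P -> inT e P -> forall k, (k < 2)%nat ->
     u Plus k P = u Minus k P) /\
  (forall P, Gam P -> inT e P ->
     mx_eq 2 1
       (mmul 2 (stress (lam Plus) (mu Plus) (u Plus) P)
               (fun j _ => coord (unormal gam P) j))
       (mmul 2 (stress (lam Minus) (mu Minus) (u Minus) P)
               (fun j _ => coord (unormal gam P) j))).

(* Main.v *)
From Pilot Require Import Defs.
From Stdlib Require Import Reals List Lra Lia ClassicalEpsilon Classical.
From Coquelicot Require Import Coquelicot.
Import Pilot.Defs.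
Open Scope R_scope.

Lemma Dt_eq g t l : derivable_pt_lim g t l -> Dt g t = l.
Proof.
  intros H. unfold Dt.
  pose proof (epsilon_spec (inhabits 0) (fun l => derivable_pt_lim g t l) (ex_intro _ l H)) as H'.
  apply (uniqueness_limite g t); auto.
Qed.

Lemma shift_deriv g x0 l :
  derivable_pt_lim (fun h => g (x0 + h)) 0 l -> derivable_pt_lim g x0 l.
Proof.
  intros H eps Heps. destruct (H eps Heps) as [d Hd]. exists d. intros h Hh Hh2.
  specialize (Hd h Hh Hh2). rewrite Rplus_0_l, Rplus_0_r in Hd. exact Hd.
Qed.

Lemma dist2_lt p q d : 0 < d -> Rabs (fst q - fst p) < d / 2 -> Rabs (snd q - snd p) < d / 2 ->
  dist2 q p < d.
Proof.
  intros Hd H1 H2. unfold dist2.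
  rewrite <- (sqrt_pow2 d) by lra.
  apply sqrt_lt_1_alt. split.
  - apply Rplus_le_le_0_compat; apply pow2_ge_0.
  - apply Rabs_def2 in H1. apply Rabs_def2 in H2. simpl. nra.
Qed.

Lemma dist2_ge1 p q : Rabs (fst q - fst p) <= dist2 q p.
Proof.
  unfold dist2. rewrite <- sqrt_Rsqr_abs. apply sqrt_le_1_alt.
  pose proof (pow2_ge_0 (snd q - snd p)). unfold Rsqr. simpl in *. lra.
Qed.
Lemma dist2_ge2 p q : Rabs (snd q - snd p) <= dist2 q p.
Proof.
  unfold dist2. rewrite <- sqrt_Rsqr_abs. apply sqrt_le_1_alt.
  pose proof (pow2_ge_0 (fst q - fst p)). unfold Rsqr. simpl in *. lra.
Qed.

Lemma locally_of_open (U : R2 -> Prop) (p : R2) : open_set U -> U p -> locally (fst p, snd p) (fun u : R2 => U (fst u, snd u)).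
Proof.
  intros HU Hp. destruct (HU p Hp) as [r [Hr Hq]].
  exists (mkposreal (r/2) ltac:(lra)). intros [a b] [H1 H2]. simpl in *.
  apply Hq. destruct p as [p1 p2]. apply dist2_lt; auto.
  all: unfold ball in *; simpl in *; unfold AbsRing_ball, abs, minus, plus, opp in *; simpl in *; try lra.
Qed.

Lemma cont_at_coq (g : R2 -> R) p : cont_at g p ->
  continuous (fun u : R2 => g (fst u, snd u)) (fst p, snd p).
Proof.
  intros Hc. apply filterlim_locally. intros eps.
  destruct (Hc eps (cond_pos eps)) as [d [Hd Hq]].
  exists (mkposreal (d/2) ltac:(lra)). intros [a b] [H1 H2].
  destruct p as [p1 p2]. simpl.
  assert (dist2 (a,b) (p1,p2) < d).
  { apply dist2_lt; auto.
    all: unfold ball in *; simpl in *; unfold AbsRing_ball, abs, minus, plus, opp in *; simpl in *; try lra. }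
  specialize (Hq _ H). unfold ball; simpl; unfold AbsRing_ball, abs, minus, plus, opp; simpl. exact Hq.
Qed.

Lemma C1_diff (U : R2 -> Prop) f p : open_set U -> C1_on U f -> U p ->
  differentiable_pt_lim (fun a b => f (a,b)) (fst p) (snd p) (partial f 0 p) (partial f 1 p).
Proof.
  intros HU [Hc Hd] Hp.
  apply filterdiff_differentiable_pt_lim.
  eapply filterdiff_ext_lin.
  - apply (is_derive_filterdiff (fun a b => f (a,b)) (fst p) (snd p)
      (fun a b => partial f 0 (a,b)) (partial f 1 p)).
    + generalize (locally_of_open U p HU Hp). apply filter_imp.
      intros [a b] Hab. simpl in *. apply is_derive_Reals.
      destruct (Hd 0%nat ltac:(lia) (a,b) Hab) as [[l Hl] _].
      unfold partial. rewrite (Dt_eq _ _ _ Hl). apply shift_deriv. exact Hl.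
    + apply is_derive_Reals.
      destruct (Hd 1%nat ltac:(lia) p Hp) as [[l Hl] _].
      unfold partial. rewrite (Dt_eq _ _ _ Hl). apply shift_deriv.
      destruct p. exact Hl.
    + destruct (Hd 0%nat ltac:(lia) p Hp) as [_ Hc0].
      apply (cont_at_coq (partial f 0) p Hc0).
  - intros [a b]. simpl. unfold plus, scal; simpl. unfold mult; simpl.
    destruct p; simpl. ring.
Qed.

Lemma lin_deriv a b t0 : derivable_pt_lim (fun t => t * a + (1 - t) * b) t0 (a - b).
Proof. apply is_derive_Reals. auto_derive; [auto | ring]. Qed.

Lemma chain_Y (U : R2 -> Prop) f A X t0 : open_set U -> C1_on U f -> U (Yseg A X t0) ->
  derivable_pt_lim (fun t => f (Yseg A X t)) t0
    (partial f 0 (Yseg A X t0) * (fst A - fst X) + partial f 1 (Yseg A X t0) * (snd A - snd X)).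
Proof.
  intros HU Hf Hp.
  pose proof (C1_diff U f _ HU Hf Hp) as Hd.
  exact (derivable_pt_lim_comp_2d (fun a b => f (a,b)) (fun t => t * fst A + (1 - t) * fst X)
     (fun t => t * snd A + (1 - t) * snd X) t0 _ _ _ _ Hd (lin_deriv _ _ _) (lin_deriv _ _ _)).
Qed.

Lemma Y_close A X t0 d : 0 < d -> exists de, 0 < de /\
  forall t, Rabs (t - t0) < de -> dist2 (Yseg A X t) (Yseg A X t0) < d.
Proof.
  intros Hd. set (K := Rabs (fst A - fst X) + Rabs (snd A - snd X) + 1).
  assert (HK : 0 < K) by (unfold K; pose proof (Rabs_pos (fst A - fst X)); pose proof (Rabs_pos (snd A - snd X)); lra).
  exists (d / 2 / K). split. { apply Rdiv_lt_0_compat; lra. }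
  intros t Ht. apply dist2_lt; auto; unfold Yseg, padd, pscal; simpl.
  - replace (t * fst A + (1 - t) * fst X - (t0 * fst A + (1 - t0) * fst X)) with ((t - t0) * (fst A - fst X)) by ring.
    rewrite Rabs_mult.
    assert (Rabs (fst A - fst X) < K) by (unfold K; pose proof (Rabs_pos (snd A - snd X)); lra).
    assert (Rabs (t - t0) * K < d/2).
    { apply (Rmult_lt_compat_r K) in Ht; auto. field_simplify in Ht; lra. }
    pose proof (Rabs_pos (t - t0)). pose proof (Rabs_pos (fst A - fst X)). nra.
  - replace (t * snd A + (1 - t) * snd X - (t0 * snd A + (1 - t0) * snd X)) with ((t - t0) * (snd A - snd X)) by ring.
    rewrite Rabs_mult.
    assert (Rabs (snd A - snd X) < K) by (unfold K; pose proof (Rabs_pos (fst A - fst X)); lra).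
    assert (Rabs (t - t0) * K < d/2).
    { apply (Rmult_lt_compat_r K) in Ht; auto. field_simplify in Ht; lra. }
    pose proof (Rabs_pos (t - t0)). pose proof (Rabs_pos (snd A - snd X)). nra.
Qed.

Lemma Y_nbhd (U : R2 -> Prop) A X t0 : open_set U -> U (Yseg A X t0) ->
  exists de, 0 < de /\ forall t, Rabs (t - t0) < de -> U (Yseg A X t).
Proof.
  intros HU Hp. destruct (HU _ Hp) as [r [Hr Hq]].
  destruct (Y_close A X t0 r Hr) as [de [Hde H]]. exists de. split; auto.
Qed.

Lemma Y_cont (h : R2 -> R) A X t0 : cont_at h (Yseg A X t0) ->
  continuity_pt (fun t => h (Yseg A X t)) t0.
Proof.
  intros Hc eps Heps. destruct (Hc eps Heps) as [d [Hd Hq]].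
  destruct (Y_close A X t0 d Hd) as [de [Hde H]].
  exists de. split; auto. intros t [_ Ht]. simpl in *. unfold R_dist in *.
  apply Hq. apply H. exact Ht.
Qed.

Lemma cont_ext (g h : R -> R) x de : 0 < de -> (forall t, Rabs (t - x) < de -> h t = g t) ->
  continuity_pt g x -> continuity_pt h x.
Proof.
  intros Hde Heq Hc eps Heps. destruct (Hc eps Heps) as [d [Hd Hq]].
  exists (Rmin d de). split. { apply Rmin_pos; auto. }
  intros t [Ht1 Ht2]. simpl in *. unfold R_dist in *.
  rewrite Heq by (pose proof (Rmin_r d de); lra).
  rewrite (Heq x) by (rewrite Rminus_diag, Rabs_R0; lra).
  apply Hq. split; auto. simpl. unfold R_dist. pose proof (Rmin_l d de); lra.
Qed.

Lemma deriv_ext (g h : R -> R) x de l : 0 < de -> (forall t, Rabs (t - x) < de -> h t = g t) ->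
  derivable_pt_lim g x l -> derivable_pt_lim h x l.
Proof.
  intros Hde Heq Hg. apply is_derive_Reals. apply is_derive_Reals in Hg.
  apply (is_derive_ext_loc g h); auto.
  exists (mkposreal de Hde). intros t Ht. symmetry. apply Heq.
  unfold ball in Ht; simpl in Ht; unfold AbsRing_ball, abs, minus, plus, opp in Ht; simpl in Ht. exact Ht.
Qed.

Lemma cpt_mulc f c x : continuity_pt f x -> continuity_pt (fun t => f t * c) x.
Proof.
  intros H. apply (continuity_pt_mult f (fun _ => c)); auto. apply continuity_pt_const. intros ? ?; reflexivity.
Qed.
Lemma cpt_plus f g x : continuity_pt f x -> continuity_pt g x -> continuity_pt (fun t => f t + g t) x.
Proof. intros H1 H2. apply (continuity_pt_plus f g); auto. Qed.
Lemma cpt_cmul f c x : continuity_pt f x -> continuity_pt (fun t => c * f t) x.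
Proof.
  intros H. apply (continuity_pt_mult (fun _ => c) f); auto. apply continuity_pt_const. intros ? ?; reflexivity.
Qed.

Definition G1 (h : R2 -> R) (A X : R2) (t : R) : R :=
  partial h 0 (Yseg A X t) * (fst A - fst X) + partial h 1 (Yseg A X t) * (snd A - snd X).

Lemma h_props (U : R2 -> Prop) h A X t0 : open_set U -> C1_on U h -> U (Yseg A X t0) ->
  (exists de, 0 < de /\ forall t, Rabs (t - t0) < de -> Dt (fun t => h (Yseg A X t)) t = G1 h A X t) /\
  derivable_pt_lim (fun t => h (Yseg A X t)) t0 (Dt (fun t => h (Yseg A X t)) t0) /\
  continuity_pt (Dt (fun t => h (Yseg A X t))) t0.
Proof.
  intros HU Hh Hp.
  destruct (Y_nbhd U A X t0 HU Hp) as [de [Hde Hn]].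
  assert (Heq : forall t, Rabs (t - t0) < de -> Dt (fun t => h (Yseg A X t)) t = G1 h A X t).
  { intros t Ht. apply Dt_eq. apply (chain_Y U); auto. }
  split; [exists de; auto|]. split.
  - rewrite (Dt_eq _ _ _ (chain_Y U h A X t0 HU Hh Hp)). apply (chain_Y U); auto.
  - apply (cont_ext (G1 h A X) _ t0 de Hde Heq).
    destruct Hh as [_ Hd].
    unfold G1. apply cpt_plus; apply cpt_mulc.
    + apply Y_cont. apply (proj2 (Hd 0%nat ltac:(lia) _ Hp)).
    + apply Y_cont. apply (proj2 (Hd 1%nat ltac:(lia) _ Hp)).
Qed.

Definition G2 (f : R2 -> R) (A X : R2) (t : R) : R :=
  Dt (fun t => partial f 0 (Yseg A X t)) t * (fst A - fst X) +
  Dt (fun t => partial f 1 (Yseg A X t)) t * (snd A - snd X).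

Lemma g_pt (U : R2 -> Prop) f A X t0 : open_set U -> C2_on U f -> U (Yseg A X t0) ->
  derivable_pt_lim (Dt (fun t => f (Yseg A X t))) t0 (G2 f A X t0).
Proof.
  intros HU [H1 H2] Hp.
  destruct (h_props U f A X t0 HU H1 Hp) as [[de [Hde Heq]] _].
  apply (deriv_ext (G1 f A X) _ t0 de); auto.
  unfold G1, G2.
  apply derivable_pt_lim_plus; apply derivable_pt_lim_scal_right.
  - apply (h_props U _ A X t0 HU (H2 0%nat ltac:(lia)) Hp).
  - apply (h_props U _ A X t0 HU (H2 1%nat ltac:(lia)) Hp).
Qed.

Lemma g_props (U : R2 -> Prop) f A X t0 : open_set U -> C2_on U f -> U (Yseg A X t0) ->
  derivable_pt_lim (fun t => f (Yseg A X t)) t0 (Dt (fun t => f (Yseg A X t)) t0) /\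
  Dt (fun t => f (Yseg A X t)) t0 = G1 f A X t0 /\
  derivable_pt_lim (Dt (fun t => f (Yseg A X t))) t0 (Dt (Dt (fun t => f (Yseg A X t))) t0) /\
  continuity_pt (Dt (Dt (fun t => f (Yseg A X t)))) t0.
Proof.
  intros HU Hf Hp. pose proof Hf as [H1 H2].
  destruct (h_props U f A X t0 HU H1 Hp) as [[de [Hde Heq]] [Hd _]].
  split; [exact Hd|]. split. { apply Heq. rewrite Rminus_diag, Rabs_R0; lra. }
  pose proof (g_pt U f A X t0 HU Hf Hp) as Hg.
  split. { rewrite (Dt_eq _ _ _ Hg). exact Hg. }
  destruct (Y_nbhd U A X t0 HU Hp) as [de2 [Hde2 Hn]].
  apply (cont_ext (G2 f A X) _ t0 de2); auto.
  - intros t Ht. apply Dt_eq. apply (g_pt U); auto.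
  - unfold G2. apply cpt_plus; apply cpt_mulc.
    + apply (h_props U _ A X t0 HU (H2 0%nat ltac:(lia)) Hp).
    + apply (h_props U _ A X t0 HU (H2 1%nat ltac:(lia)) Hp).
Qed.

Lemma Rint_FTC (F dF : R -> R) a b : a <= b ->
  (forall x, a <= x <= b -> derivable_pt_lim F x (dF x)) ->
  (forall x, a <= x <= b -> continuity_pt dF x) ->
  Rint dF a b = F b - F a.
Proof.
  intros Hab Hd Hc.
  assert (H : is_RInt dF a b (minus (F b) (F a))).
  { apply (is_RInt_derive (V := R_CompleteNormedModule) F dF).
    - intros x Hx. rewrite Rmin_left, Rmax_right in Hx by lra. apply is_derive_Reals. auto.
    - intros x Hx. rewrite Rmin_left, Rmax_right in Hx by lra. apply continuity_pt_filterlim. auto. }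
  assert (pr : Riemann_integrable dF a b) by (apply ex_RInt_Reals_0; eexists; eauto).
  assert (Hv : RiemannInt pr = F b - F a).
  { rewrite <- RInt_Reals. apply is_RInt_unique. exact H. }
  unfold Rint.
  destruct (epsilon_spec (inhabits 0) (fun l => exists pr : Riemann_integrable dF a b, RiemannInt pr = l)
     (ex_intro _ _ (ex_intro _ pr Hv))) as [pr' Hpr'].
  rewrite <- Hpr'. rewrite <- RInt_Reals. apply is_RInt_unique. exact H.
Qed.

Lemma dpl_eq f x l1 l2 : derivable_pt_lim f x l1 -> l1 = l2 -> derivable_pt_lim f x l2.
Proof. intros H ->; exact H. Qed.

Lemma R1_val (U : R2 -> Prop) f A X a b : open_set U -> C2_on U f -> a <= b ->
  (forall t, a <= t <= b -> U (Yseg A X t)) ->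
  Rint (fun t => (1 - t) * Dt (Dt (fun t' => f (Yseg A X t'))) t) a b =
  ((1 - b) * Dt (fun t' => f (Yseg A X t')) b + f (Yseg A X b)) -
  ((1 - a) * Dt (fun t' => f (Yseg A X t')) a + f (Yseg A X a)).
Proof.
  intros HU Hf Hab HY.
  apply (Rint_FTC (fun t => (1 - t) * Dt (fun t' => f (Yseg A X t')) t + f (Yseg A X t))); auto.
  - intros x Hx. destruct (g_props U f A X x HU Hf (HY x Hx)) as [Hg [_ [Hdg _]]].
    eapply dpl_eq.
    + apply derivable_pt_lim_plus; [apply derivable_pt_lim_mult|].
      * apply is_derive_Reals. auto_derive; [auto|reflexivity].
      * exact Hdg.
      * exact Hg.
    + ring.
  - intros x Hx. destruct (g_props U f A X x HU Hf (HY x Hx)) as [_ [_ [_ Hc]]].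
    apply (continuity_pt_mult (fun t => 1 - t)); auto.
    apply derivable_continuous_pt. exists (-1). apply is_derive_Reals. auto_derive; [auto|ring].
Qed.

Lemma W_val (U : R2 -> Prop) h A X a b : open_set U -> C1_on U h -> a <= b ->
  (forall t, a <= t <= b -> U (Yseg A X t)) ->
  Rint (fun t => Dt (fun t' => h (Yseg A X t')) t) a b = h (Yseg A X b) - h (Yseg A X a).
Proof.
  intros HU Hh Hab HY.
  apply (Rint_FTC (fun t => h (Yseg A X t))); auto.
  - intros x Hx. apply (h_props U h A X x HU Hh (HY x Hx)).
  - intros x Hx. apply (h_props U h A X x HU Hh (HY x Hx)).
Qed.

Lemma conn (O1 O2 : R2 -> Prop) (Z : R -> R2) c :
  open_set O1 -> open_set O2 -> (forall P, ~ (O1 P /\ O2 P)) -> 0 <= c ->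
  (forall t, 0 <= t <= c -> O1 (Z t) \/ O2 (Z t)) -> O1 (Z 0) ->
  (forall t0 r, 0 < r -> exists de, 0 < de /\ forall t, Rabs (t - t0) < de -> dist2 (Z t) (Z t0) < r) ->
  forall t, 0 <= t <= c -> O1 (Z t).
Proof.
  intros H1 H2 Hdis Hc Hcov H0 HZ.
  set (E := fun t => 0 <= t <= c /\ forall t', 0 <= t' <= t -> O1 (Z t')).
  assert (Hb : bound E) by (exists c; intros x [Hx _]; lra).
  assert (He : exists x, E x).
  { exists 0. split; [lra|]. intros t' Ht'. replace t' with 0 by lra. exact H0. }
  destruct (completeness E Hb He) as [m [Hub Hlub]].
  assert (Hm0 : 0 <= m) by (apply Hub; split; [lra|]; intros t' Ht'; replace t' with 0 by lra; exact H0).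
  assert (Hmc : m <= c) by (apply Hlub; intros x [Hx _]; lra).
  assert (Hbelow : forall t', 0 <= t' < m -> O1 (Z t')).
  { intros t' Ht'. destruct (classic (exists t, E t /\ t' <= t)) as [[t [[Ht Ht2] Hle]]|Hn].
    - apply Ht2. lra.
    - exfalso. assert (m <= t'). { apply Hlub. intros x Hx. destruct (Rle_lt_dec x t'); auto.
        exfalso. apply Hn. exists x. split; auto; lra. }
      lra. }
  assert (HZm : O1 (Z m)).
  { destruct (Hcov m ltac:(lra)) as [Hm|Hm]; auto. exfalso.
    destruct (H2 _ Hm) as [r [Hr Hq]].
    destruct (HZ m r Hr) as [de [Hde Hz]].
    destruct (Req_dec m 0) as [Hm00|Hm00].
    { subst m. apply (Hdis (Z 0)); auto. }
    set (t' := Rmax 0 (m - de/2)).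
    assert (0 <= t' < m) by (unfold t'; apply Rmax_case_strong; intros; lra).
    assert (Rabs (t' - m) < de).
    { unfold t'. apply Rmax_case_strong; intros; apply Rabs_def1; lra. }
    apply (Hdis (Z t')). split; [apply Hbelow; auto| apply Hq; apply Hz; auto]. }
  assert (Hmceq : m = c).
  { destruct (Rle_lt_or_eq_dec _ _ Hmc) as [Hlt|]; auto. exfalso.
    destruct (H1 _ HZm) as [r [Hr Hq]].
    destruct (HZ m r Hr) as [de [Hde Hz]].
    set (t'' := Rmin c (m + de/2)).
    assert (m < t'' <= c) by (unfold t''; apply Rmin_case_strong; intros; lra).
    assert (E t'').
    { split; [lra|]. intros t' Ht'. destruct (Rlt_le_dec t' m).
      - apply Hbelow; lra.
      - apply Hq. apply Hz. apply Rabs_def1; unfold t'' in *; revert Ht'; apply Rmin_case_strong; intros; lra. }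
    assert (t'' <= m) by (apply Hub; auto). lra. }
  intros t Ht. destruct (Rlt_le_dec t m).
  - apply Hbelow; lra.
  - replace t with m by lra. exact HZm.
Qed.

Lemma Y0 A X : Yseg A X 0 = X.
Proof. destruct X; unfold Yseg, padd, pscal; simpl; f_equal; ring. Qed.
Lemma Y1 A X : Yseg A X 1 = A.
Proof. destruct A; unfold Yseg, padd, pscal; simpl; f_equal; ring. Qed.
Lemma Yrev A X t : Yseg X A t = Yseg A X (1 - t).
Proof. unfold Yseg, padd, pscal; simpl; f_equal; ring. Qed.

Lemma inT_convex e A X t : inT e A -> inT e X -> 0 <= t <= 1 -> inT e (Yseg A X t).
Proof.
  intros HA HX Ht. destruct e as [a b c | x0 x1 y0 y1]; simpl in *.
  - destruct HA as [l1 [l2 [l3 [? [? [? [? ->]]]]]]].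
    destruct HX as [m1 [m2 [m3 [? [? [? [? ->]]]]]]].
    exists (t*l1 + (1-t)*m1), (t*l2 + (1-t)*m2), (t*l3 + (1-t)*m3).
    repeat split; try nra.
    unfold Yseg, padd, pscal; simpl; f_equal; ring.
  - unfold Yseg, padd, pscal; simpl. nra.
Qed.

Section Seg.
Variables (e : elem) (O1 O2 Gm : R2 -> Prop) (A X : R2) (tt : R).
Hypotheses (H1 : open_set O1) (H2 : open_set O2) (Hdis : forall P, ~ (O1 P /\ O2 P))
  (HG1 : forall P, Gm P -> ~ O1 P) (HG2 : forall P, Gm P -> ~ O2 P)
  (Hcov : forall P, inT e P -> O1 P \/ O2 P \/ Gm P)
  (HA : inT e A) (HA2 : O2 A) (HX : inT e X) (HX1 : O1 X)
  (Htt : 0 <= tt <= 1) (HGt : Gm (Yseg A X tt))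
  (Huniq : forall t, 0 <= t <= 1 -> Gm (Yseg A X t) -> inT e (Yseg A X t) -> t = tt).

Lemma tt_bounds : 0 < tt < 1.
Proof.
  split.
  - destruct (Req_dec tt 0) as [E|E]; [|lra]. exfalso. rewrite E, Y0 in HGt. apply (HG1 X); auto.
  - destruct (Req_dec tt 1) as [E|E]; [|lra]. exfalso. rewrite E, Y1 in HGt. apply (HG2 A); auto.
Qed.

Lemma seg_left : forall t, 0 <= t < tt -> O1 (Yseg A X t).
Proof.
  intros t1 Ht1.
  apply (conn O1 O2 (Yseg A X) t1); auto; try lra.
  - intros t Ht. assert (Hin : inT e (Yseg A X t)) by (apply inT_convex; auto; lra).
    destruct (Hcov _ Hin) as [?|[?|Hg]]; auto.
    exfalso. assert (t = tt) by (apply Huniq; auto; lra). lra.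
  - rewrite Y0. exact HX1.
  - intros t0 r Hr. apply Y_close; auto.
Qed.

Lemma seg_right : forall t, tt < t <= 1 -> O2 (Yseg A X t).
Proof.
  intros t1 Ht1.
  replace t1 with (1 - (1 - t1)) by ring. rewrite <- Yrev.
  apply (conn O2 O1 (Yseg X A) (1 - t1)); auto; try lra.
  - intros P [? ?]. apply (Hdis P); auto.
  - intros t Ht. rewrite Yrev. assert (Hin : inT e (Yseg A X (1 - t))) by (apply inT_convex; auto; lra).
    destruct (Hcov _ Hin) as [?|[?|Hg]]; auto.
    exfalso. assert (1 - t = tt) by (apply Huniq; auto; lra). lra.
  - rewrite Y0. exact HA2.
  - intros t0 r Hr. apply Y_close; auto.
Qed.
End Seg.

Lemma dist2_refl p : dist2 p p = 0.
Proof. unfold dist2. replace ((fst p - fst p) ^ 2 + (snd p - snd p) ^ 2) with 0 by ring. apply sqrt_0. Qed.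

Lemma clos_seg (S : R2 -> Prop) P Q a b : a < b -> (forall t, a <= t < b -> S (Yseg P Q t)) ->
  forall t, a <= t <= b -> closure S (Yseg P Q t).
Proof.
  intros Hab HS t Ht r Hr.
  destruct (Rlt_le_dec t b).
  - exists (Yseg P Q t). split; [apply HS; lra| rewrite dist2_refl; lra].
  - destruct (Y_close P Q t r Hr) as [de [Hde Hc]].
    set (t' := t - Rmin de (b - a) / 2).
    assert (0 < Rmin de (b - a)) by (apply Rmin_pos; lra).
    assert (Rmin de (b - a) <= de) by apply Rmin_l.
    assert (Rmin de (b - a) <= b - a) by apply Rmin_r.
    exists (Yseg P Q t'). split.
    + apply HS. unfold t'. lra.
    + apply Hc. unfold t'. apply Rabs_def1; lra.
Qed.

Lemma deriv_agree g1 g2 tau l1 l2 : 0 <= tau <= 1 ->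
  derivable_pt_lim g1 tau l1 -> derivable_pt_lim g2 tau l2 ->
  (forall s, 0 <= s <= 1 -> g1 s = g2 s) -> l1 = l2.
Proof.
  intros Ht H1 H2 Heq.
  pose proof (derivable_pt_lim_minus _ _ _ _ _ H1 H2) as H.
  destruct (Req_dec (l1 - l2) 0) as [E|E]; [lra|]. exfalso.
  assert (Hp : 0 < Rabs (l1 - l2)) by (apply Rabs_pos_lt; auto).
  destruct (H _ Hp) as [[d Hd] Hq]. simpl in Hq.
  set (m := Rmin (d/2) (1/2)).
  assert (0 < m) by (unfold m; apply Rmin_pos; lra).
  assert (m <= d/2) by apply Rmin_l. assert (m <= 1/2) by apply Rmin_r.
  destruct (Rle_lt_dec tau (1/2)).
  - specialize (Hq m ltac:(lra) ltac:(rewrite Rabs_pos_eq; lra)).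
    unfold minus_fct in Hq. rewrite (Heq tau), (Heq (tau + m)) in Hq by lra.
    replace ((g2 (tau + m) - g2 (tau + m) - (g2 tau - g2 tau)) / m - (l1 - l2)) with (- (l1 - l2)) in Hq by (field; lra).
    rewrite Rabs_Ropp in Hq. lra.
  - specialize (Hq (-m) ltac:(lra) ltac:(rewrite Rabs_Ropp, Rabs_pos_eq; lra)).
    unfold minus_fct in Hq. rewrite (Heq tau), (Heq (tau + - m)) in Hq by lra.
    replace ((g2 (tau + - m) - g2 (tau + - m) - (g2 tau - g2 tau)) / - m - (l1 - l2)) with (- (l1 - l2)) in Hq by (field; lra).
    rewrite Rabs_Ropp in Hq. lra.
Qed.

Lemma C2_real_der c tau : C2_real c -> 0 <= tau <= 1 -> derivable_pt_lim c tau (Dt c tau).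
Proof.
  intros [a [b [Ha [Hb H]]]] Ht. destruct (H tau ltac:(lra)) as [[l Hl] _].
  rewrite (Dt_eq _ _ _ Hl). exact Hl.
Qed.

Lemma comp_gam (U : R2 -> Prop) f gam tau : open_set U -> C1_on U f -> U (gam tau) ->
  C2_real (fun t => fst (gam t)) -> C2_real (fun t => snd (gam t)) -> 0 <= tau <= 1 ->
  derivable_pt_lim (fun s => f (gam s)) tau
    (partial f 0 (gam tau) * fst (gdot gam tau) + partial f 1 (gam tau) * snd (gdot gam tau)).
Proof.
  intros HU Hf Hp Hc1 Hc2 Ht.
  pose proof (C1_diff U f _ HU Hf Hp) as Hd.
  pose proof (derivable_pt_lim_comp_2d (fun a b => f (a,b)) (fun t => fst (gam t))
     (fun t => snd (gam t)) tau _ _ _ _ Hd (C2_real_der _ _ Hc1 Ht) (C2_real_der _ _ Hc2 Ht)) as H.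
  apply (deriv_ext _ (fun s => f (gam s)) tau 1 _ ltac:(lra)) in H.
  - exact H.
  - intros t _. simpl. rewrite <- surjective_pairing. reflexivity.
Qed.

Lemma tang_eq (U1 U2 : R2 -> Prop) f1 f2 gam P tau :
  open_set U1 -> open_set U2 -> C1_on U1 f1 -> C1_on U2 f2 -> U1 P -> U2 P ->
  0 <= tau <= 1 -> gam tau = P ->
  C2_real (fun t => fst (gam t)) -> C2_real (fun t => snd (gam t)) ->
  (forall s, 0 <= s <= 1 -> f1 (gam s) = f2 (gam s)) ->
  partial f1 0 P * fst (gdot gam tau) + partial f1 1 P * snd (gdot gam tau) =
  partial f2 0 P * fst (gdot gam tau) + partial f2 1 P * snd (gdot gam tau).
Proof.
  intros HU1 HU2 Hf1 Hf2 HP1 HP2 Ht Hg Hc1 Hc2 Heq. subst P.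
  apply (deriv_agree (fun s => f1 (gam s)) (fun s => f2 (gam s)) tau); auto.
  - apply (comp_gam U1); auto.
  - apply (comp_gam U2); auto.
Qed.

Definition solv (lam mu a b y0 y1 y2 y3 : R) (i : nat) : R :=
  let r := a * a + b * b in
  let c := lam + 2 * mu in
  let Tn := a * y0 + b * y1 in let Tt := - b * y0 + a * y1 in
  let Q := - b * y2 + a * y3 in let Qn := a * y2 + b * y3 in
  let P := (Tn - lam * Q) / c in let Pt := Tt / mu - Qn in
  let p0 := (a * P - b * Pt) / r in let p1 := (b * P + a * Pt) / r in
  match i with
  | 0 => (a * p0 - b * y2) / r
  | 1 => (a * p1 - b * y3) / r
  | 2 => (b * p0 + a * y2) / r
  | _ => (b * p1 + a * y3) / r
  end.

Definition ej (j k : nat) : R := if Nat.eqb j k then 1 else 0.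
Definition Binv (lam mu : R) (n : R2) : Mx := fun i j =>
  solv lam mu (fst n) (snd n) (ej j 0) (ej j 1) (ej j 2) (ej j 3) i.

Lemma Binv_ok lam mu n : 0 < mu -> lam + 2 * mu <> 0 -> fst n * fst n + snd n * snd n <> 0 ->
  mx_eq 4 4 (mmul 4 (Binv lam mu n) (Nmat lam mu n)) idm /\
  mx_eq 4 4 (mmul 4 (Nmat lam mu n) (Binv lam mu n)) idm.
Proof.
  intros Hmu Hc Hr. destruct n as [a b]. simpl in Hr.
  split; intros i j Hi Hj;
  (destruct i as [|[|[|[|i]]]]; [| | | | lia]);
  (destruct j as [|[|[|[|j]]]]; [| | | | lia]);
  unfold mmul, Binv, Nmat, idm, solv, ej; simpl; field; lra.
Qed.

Lemma sum4 f : sumR 4 f = f 0%nat + f 1%nat + f 2%nat + f 3%nat.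
Proof. simpl. ring. Qed.

Lemma sumR_ext n f g : (forall q, (q < n)%nat -> f q = g q) -> sumR n f = sumR n g.
Proof.
  induction n; intros H; simpl; auto.
  rewrite IHn by (intros; apply H; lia). rewrite H by lia. reflexivity.
Qed.

Lemma jump_alg (B No Ns : Mx) (wo ws : nat -> R) :
  mx_eq 4 4 (mmul 4 B No) idm ->
  (forall q, (q < 4)%nat -> sumR 4 (fun k => No q k * wo k) = sumR 4 (fun l => Ns q l * ws l)) ->
  forall m, (m < 4)%nat -> wo m = sumR 4 (fun l => mmul 4 B Ns m l * ws l).
Proof.
  intros HB Hrow m Hm.
  transitivity (sumR 4 (fun k => mmul 4 B No m k * wo k)).
  - rewrite (sumR_ext 4 _ (fun k => idm m k * wo k)) by (intros; rewrite HB; auto).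
    destruct m as [|[|[|[|m]]]]; try lia; unfold idm; simpl; ring.
  - transitivity (sumR 4 (fun q => B m q * sumR 4 (fun k => No q k * wo k))).
    + unfold mmul. rewrite !sum4. ring.
    + rewrite (sumR_ext 4 _ (fun q => B m q * sumR 4 (fun l => Ns q l * ws l))) by (intros; rewrite Hrow; auto).
      unfold mmul. rewrite !sum4. ring.
Qed.

Lemma minv_left lam mu n : 0 < mu -> lam + 2 * mu <> 0 -> fst n * fst n + snd n * snd n <> 0 ->
  mx_eq 4 4 (mmul 4 (minv 4 (Nmat lam mu n)) (Nmat lam mu n)) idm.
Proof.
  intros H1 H2 H3. unfold minv.
  pose proof (epsilon_spec (inhabits (fun _ _ => 0))
    (fun B => mx_eq 4 4 (mmul 4 B (Nmat lam mu n)) idm /\ mx_eq 4 4 (mmul 4 (Nmat lam mu n) B) idm)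
    (ex_intro _ _ (Binv_ok lam mu n H1 H2 H3))) as [H _].
  exact H.
Qed.

Lemma rows_eq (lamP muP lamM muM : R) (uP uM : nat -> R2 -> R) (P n : R2) :
  mx_eq 2 1 (mmul 2 (stress lamP muP uP P) (fun j _ => coord n j))
            (mmul 2 (stress lamM muM uM P) (fun j _ => coord n j)) ->
  (forall k, (k < 2)%nat -> partial (uP k) 0 P * (- snd n) + partial (uP k) 1 P * fst n =
                            partial (uM k) 0 P * (- snd n) + partial (uM k) 1 P * fst n) ->
  forall q, (q < 4)%nat -> sumR 4 (fun k => Nmat lamP muP n q k * VecGrad uP P k 0%nat) =
                          sumR 4 (fun k => Nmat lamM muM n q k * VecGrad uM P k 0%nat).
Proof.
  intros Htr Htg q Hq. destruct n as [n1 n2]. simpl in Htg.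
  pose proof (Htr 0%nat 0%nat ltac:(lia) ltac:(lia)) as T0.
  pose proof (Htr 1%nat 0%nat ltac:(lia) ltac:(lia)) as T1.
  pose proof (Htg 0%nat ltac:(lia)) as G0.
  pose proof (Htg 1%nat ltac:(lia)) as G1.
  unfold mmul, stress, kdelta, coord in T0, T1. simpl in T0, T1.
  rewrite !sum4.
  destruct q as [|[|[|[|q]]]]; try lia; unfold Nmat, VecGrad, vecm, grad; simpl.
  - lra.
  - lra.
  - lra.
  - lra.
Qed.

Theorem mainTheorem5
  (f : fespace) (e : elem) (Om : sgn -> R2 -> Prop) (Gam : R2 -> Prop)
  (gam : R -> R2) (D E : R2) (lam mu : sgn -> R) (u : sgn -> nat -> R2 -> R)
  (s : sgn) (sg : R) (A X : R2) (tt : R) :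
  (forall s0, 0 < lam s0) -> (forall s0, 0 < mu s0) ->
  interface_element e Om Gam gam D E ->
  PC2_int e Om Gam gam lam mu u ->
  labelling e Om D E s sg ->
  (* i in I^{s'} *)
  In A (nodes f e) -> Tsub e Om (opp s) A ->
  (* X in T^s_* *)
  Tstar e Om gam D E sg s X ->
  (* Y~_i = Y_i(t~_i, X): the unique point where [X, A_i] meets Gamma ∩ T *)
  0 <= tt <= 1 ->
  Gam (Yseg A X tt) -> inT e (Yseg A X tt) ->
  (forall t, 0 <= t <= 1 -> Gam (Yseg A X t) -> inT e (Yseg A X t) -> t = tt) ->
  let Yt := Yseg A X tt in
  let Ms := Mmat lam mu s (unormal gam Yt) in
  let KAX := kron 2 2 (rowp (psub A X)) idm in
  let KAY := kron 2 2 (rowp (psub A Yt)) idm in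
  let R1 := fun k (_ : nat) =>
    Rint (fun t => (1 - t) * Dt (Dt (fun t' => u s k (Yseg A X t'))) t) 0 tt in
  let R2' := fun k (_ : nat) =>
    Rint (fun t => (1 - t) * Dt (Dt (fun t' => u (opp s) k (Yseg A X t'))) t) tt 1 in
  let W := fun k (_ : nat) =>
    Rint (fun t => Dt (fun t' => VecGrad (u s) (Yseg A X t') k 0%nat) t) 0 tt in
  let R3 := mscal (1 - tt) (mmul 4 KAX (mmul 4 (msub Ms idm) W)) in
  let Rs := madd R1 (madd R2' R3) in
  mx_eq 2 1 (ucol (u (opp s)) A)
    (madd (ucol (u s) X)
      (madd (mmul 4 KAX (VecGrad (u s) X))
        (madd (mmul 4 KAY (mmul 4 (msub Ms idm) (VecGrad (u s) X))) Rs))).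
Proof.
  intros Hlam Hmu Hie Hpc Hlab HAin HAs HX Htt HGt HinT Huniq.
  intros Yt Ms KAX KAY R1 R2' W R3 Rs.
  destruct Hie as [_ [HOp [HOm [Hdis0 [HGam [Hcov0 [Hgiff [_ [_ [_ [_ [Hc1 [Hc2 [Hgd _]]]]]]]]]]]]]].
  destruct Hpc as [HU [Hcont Htrac]].
  destruct HAs as [HAT HAo]. destruct HX as [_ [[HXT HXs] _]].
  assert (HOs : forall s0, open_set (Om s0)) by (intros []; auto).
  assert (Hdis : forall P, ~ (Om s P /\ Om (opp s) P)).
  { destruct s; simpl; intros P [? ?]; apply (Hdis0 P); tauto. }
  assert (Hcov : forall P, inT e P -> Om s P \/ Om (opp s) P \/ Gam P).
  { destruct s; simpl; intros P HP; destruct (Hcov0 P HP) as [?|[?|?]]; tauto. }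
  assert (HG1 : forall P, Gam P -> ~ Om s P) by (intros; apply HGam; auto).
  assert (HG2 : forall P, Gam P -> ~ Om (opp s) P) by (intros; apply HGam; auto).
  assert (Htb : 0 < tt < 1) by (apply (tt_bounds (Om s) (Om (opp s)) Gam A X tt HG1 HG2 HAo HXs Htt HGt)).
  assert (Hleft : forall t, 0 <= t < tt -> Tsub e Om s (Yseg A X t)).
  { intros t Ht. split. { apply inT_convex; auto; lra. } apply (seg_left e (Om s) (Om (opp s)) Gam A X tt (HOs s) (HOs (opp s)) Hdis Hcov HAT HXT HXs Htt Huniq); lra. }
  assert (Hright : forall t, tt < t <= 1 -> Tsub e Om (opp s) (Yseg A X t)).
  { intros t Ht. split. { apply inT_convex; auto; lra. } apply (seg_right e (Om s) (Om (opp s)) Gam A X tt (HOs s) (HOs (opp s)) Hdis Hcov HAT HAo HXT Htt Huniq); lra. }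
  destruct (HU s) as [Us [HUs [HclUs HC2s]]].
  destruct (HU (opp s)) as [Uo [HUo [HclUo HC2o]]].
  assert (HYs : forall t, 0 <= t <= tt -> Us (Yseg A X t)).
  { intros t Ht. apply HclUs. apply (clos_seg _ A X 0 tt); auto; lra. }
  assert (HYo : forall t, tt <= t <= 1 -> Uo (Yseg A X t)).
  { intros t Ht. apply HclUo. replace t with (1 - (1 - t)) by ring. rewrite <- Yrev.
    apply (clos_seg _ X A 0 (1 - tt)); try lra.
    intros t' Ht'. rewrite Yrev. apply Hright. lra. }
  assert (HYts : Us (Yseg A X tt)) by (apply HYs; lra).
  assert (HYto : Uo (Yseg A X tt)) by (apply HYo; lra).
  set (tau := epsilon (inhabits 0) (fun tau => 0 <= tau <= 1 /\ gam tau = Yseg A X tt)).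
  assert (Htau : 0 <= tau <= 1 /\ gam tau = Yseg A X tt).
  { apply epsilon_spec. apply Hgiff. auto. }
  set (v := gdot gam tau).
  set (nv := sqrt (fst v ^ 2 + snd v ^ 2)).
  assert (Hn : unormal gam Yt = (snd v / nv, - fst v / nv)) by reflexivity.
  assert (Hv : fst v ^ 2 + snd v ^ 2 > 0).
  { assert (v <> (0,0)) by (apply Hgd; tauto). destruct v as [v1 v2]; simpl in *.
    destruct (Req_dec v1 0); destruct (Req_dec v2 0); subst; try (exfalso; auto; fail); nra. }
  assert (Hnv : nv > 0) by (apply sqrt_lt_R0; lra).
  assert (Hnn : fst (unormal gam Yt) * fst (unormal gam Yt) + snd (unormal gam Yt) * snd (unormal gam Yt) <> 0).
  { rewrite Hn. cbn [fst snd]. replace (snd v / nv * (snd v / nv) + - fst v / nv * (- fst v / nv)) with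
      ((fst v ^ 2 + snd v ^ 2) / (nv * nv)) by (field; lra).
    apply Rgt_not_eq. apply Rdiv_lt_0_compat; nra. }
  assert (Htang : forall k, (k < 2)%nat ->
    partial (u (opp s) k) 0 Yt * (- snd (unormal gam Yt)) + partial (u (opp s) k) 1 Yt * fst (unormal gam Yt) =
    partial (u s k) 0 Yt * (- snd (unormal gam Yt)) + partial (u s k) 1 Yt * fst (unormal gam Yt)).
  { intros k Hk. rewrite Hn. cbn [fst snd].
    assert (HT := tang_eq Uo Us (u (opp s) k) (u s k) gam Yt tau HUo HUs
      (proj1 (HC2o k Hk)) (proj1 (HC2s k Hk)) HYto HYts (proj1 Htau) (proj2 Htau) Hc1 Hc2).
    fold v in HT.
    assert (HT' : partial (u (opp s) k) 0 Yt * fst v + partial (u (opp s) k) 1 Yt * snd v =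
                  partial (u s k) 0 Yt * fst v + partial (u s k) 1 Yt * snd v).
    { apply HT. intros s1 Hs1. assert (Hgg : Gam (gam s1) /\ inT e (gam s1)) by (apply Hgiff; eauto).
      destruct Hgg as [Hg1 Hg2]. pose proof (Hcont _ Hg1 Hg2 k Hk). destruct s; simpl; auto. }
    replace (partial (u (opp s) k) 0 Yt * - (- fst v / nv) + partial (u (opp s) k) 1 Yt * (snd v / nv))
      with ((partial (u (opp s) k) 0 Yt * fst v + partial (u (opp s) k) 1 Yt * snd v) / nv) by (unfold Rdiv; ring).
    rewrite HT'. unfold Rdiv; ring. }
  assert (Htr : mx_eq 2 1 (mmul 2 (stress (lam (opp s)) (mu (opp s)) (u (opp s)) Yt) (fun j _ => coord (unormal gam Yt) j))
            (mmul 2 (stress (lam s) (mu s) (u s) Yt) (fun j _ => coord (unormal gam Yt) j))).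
  { pose proof (Htrac Yt HGt HinT) as H. destruct s; simpl; auto.
    intros i j Hi Hj. symmetry. apply H; auto. }
  assert (Hjump : forall m, (m < 4)%nat ->
    VecGrad (u (opp s)) Yt m 0%nat = sumR 4 (fun l => Ms m l * VecGrad (u s) Yt l 0%nat)).
  { apply (jump_alg _ (Nmat (lam (opp s)) (mu (opp s)) (unormal gam Yt)) _ (fun k => VecGrad (u (opp s)) Yt k 0%nat)
       (fun k => VecGrad (u s) Yt k 0%nat)).
    - apply minv_left; auto. pose proof (Hlam (opp s)); pose proof (Hmu (opp s)); lra.
    - apply rows_eq; auto. }
  intros k jj Hk Hjj.
  assert (HR1 : R1 k jj = ((1 - tt) * Dt (fun t' => u s k (Yseg A X t')) tt + u s k (Yseg A X tt)) -
     ((1 - 0) * Dt (fun t' => u s k (Yseg A X t')) 0 + u s k (Yseg A X 0))).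
  { apply (R1_val Us); auto; lra. }
  assert (HR2 : R2' k jj = ((1 - 1) * Dt (fun t' => u (opp s) k (Yseg A X t')) 1 + u (opp s) k (Yseg A X 1)) -
     ((1 - tt) * Dt (fun t' => u (opp s) k (Yseg A X t')) tt + u (opp s) k (Yseg A X tt))).
  { apply (R1_val Uo); auto; lra. }
  assert (D1 : Dt (fun t' => u s k (Yseg A X t')) tt = G1 (u s k) A X tt).
  { apply (g_props Us); auto. }
  assert (D2 : Dt (fun t' => u s k (Yseg A X t')) 0 = G1 (u s k) A X 0).
  { apply (g_props Us); auto. apply HYs; lra. }
  assert (D3 : Dt (fun t' => u (opp s) k (Yseg A X t')) tt = G1 (u (opp s) k) A X tt).
  { apply (g_props Uo); auto. }
  assert (HW : forall m, (m < 4)%nat -> W m jj = VecGrad (u s) (Yseg A X tt) m 0%nat - VecGrad (u s) (Yseg A X 0) m 0%nat).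
  { intros m Hm. unfold W.
    apply (W_val Us (fun p => VecGrad (u s) p m 0%nat)); auto; try lra.
    destruct m as [|[|[|[|m]]]]; try lia.
    - exact (proj2 (HC2s 0%nat ltac:(lia)) 0%nat ltac:(lia)).
    - exact (proj2 (HC2s 1%nat ltac:(lia)) 0%nat ltac:(lia)).
    - exact (proj2 (HC2s 0%nat ltac:(lia)) 1%nat ltac:(lia)).
    - exact (proj2 (HC2s 1%nat ltac:(lia)) 1%nat ltac:(lia)). }
  assert (HC : u s k (Yseg A X tt) = u (opp s) k (Yseg A X tt)).
  { pose proof (Hcont _ HGt HinT k Hk). destruct s; simpl; auto. }
  rewrite Y0 in HR1, HW. rewrite Y1 in HR2.
  unfold Rs, R3, madd, mscal, ucol.
  rewrite HR1, HR2, D1, D2, D3.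
  unfold mmul. rewrite !sum4.
  rewrite !HW by lia.
  clearbody Ms.
  unfold G1 in *. rewrite !Y0.
  assert (J0 := Hjump 0%nat ltac:(lia)). assert (J1 := Hjump 1%nat ltac:(lia)).
  assert (J2 := Hjump 2%nat ltac:(lia)). assert (J3 := Hjump 3%nat ltac:(lia)).
  subst Yt KAX KAY.
  unfold VecGrad, vecm, grad, kron, rowp, psub, coord, msub, idm in *.
  rewrite !sum4 in J0, J1, J2, J3.
  simpl in *.
  destruct k as [|[|k]]; try lia; simpl.
  - rewrite ?J0, ?J1, ?J2, ?J3, HC. ring.
  - rewrite ?J0, ?J1, ?J2, ?J3, HC. ring.
Qed.
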